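(* Let $n\geq 1$. The map $\rho_i\mapsto x^iy^{-i}$ ($1\leq i\leq n$) extends to a group isomorphism from the group with generators $\rho_1,\dots,\rho_n$ and relations $\rho_1\rho_n\rho_i=\rho_{i+1}\rho_n$ ($1\leq i\leq n-1$) onto the group $G(n,n+1)=\langle x,y\mid x^n=y^{n+1}\rangle$.
   Context: $G(n,n+1)$ is the $(n,n+1)$-torus knot group, given by the displayed presentation. *)

(* Defs.v *)
(* Finitely presented groups encoded by words modulo
   the congruence generated by free reduction and the relators. *)
From Stdlib Require List.
From mathcomp Require Import all_boot.
Set Implicit Arguments. Unset Strict Implicit. Unset Printing Implicit Defensive.

(* A letter (s, b): the generator s if b = false, its inverse if b = true. *)
Definition word (S : Type) := seq (S * bool).

Definition inv_word (S : Type) (w : word S) : word S :=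
  rev (map (fun l => (l.1, ~~ l.2)) w).

(* Equality in the group < S | R > (R a list of relators, each relator r
   meaning r = 1): the smallest equivalence relation on words which is
   closed under free reduction and deletion of relators in any position.
   This is exactly equality modulo the normal closure of R in the free group. *)
Inductive wequiv (S : Type) (R : seq (word S)) : word S -> word S -> Prop :=
| we_refl w : wequiv R w w
| we_sym w1 w2 : wequiv R w1 w2 -> wequiv R w2 w1
| we_trans w1 w2 w3 : wequiv R w1 w2 -> wequiv R w2 w3 -> wequiv R w1 w3
| we_free (u v : word S) (s : S) (b : bool) :
    wequiv R (u ++ [:: (s, b); (s, ~~ b)] ++ v) (u ++ v)
| we_rel (u v r : word S) : List.In r R -> wequiv R (u ++ r ++ v) (u ++ v).

(* Generator rho_(k+1) is represented by the ordinal k : 'I_n. *)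
Definition ord_of (n : nat) (i0 : 'I_n) (k : nat) : 'I_n := insubd i0 k.

(* For i : 'I_n with i.+1 < n (i.e. 1 <= i+1 <= n-1), the relator of
   rho_1 rho_n rho_(i+1) = rho_(i+2) rho_n, namely
   rho_1 rho_n rho_(i+1) rho_n^-1 rho_(i+2)^-1. *)
Definition rho_relator (n : nat) (i : 'I_n) : word 'I_n :=
  let o := ord_of i in
  [:: (o 0, false); (o n.-1, false); (o i, false);
      (o n.-1, true); (o i.+1, true)].

Definition rho_rels (n : nat) : seq (word 'I_n) :=
  map (@rho_relator n) (filter (fun i : 'I_n => i.+1 < n) (enum 'I_n)).

Inductive xy := gen_x | gen_y.

Definition torus_rels (n : nat) : seq (word xy) :=
  [:: nseq n (gen_x, false) ++ nseq n.+1 (gen_y, true)].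

Definition rho_img (n : nat) (i : 'I_n) : word xy :=
  nseq i.+1 (gen_x, false) ++ nseq i.+1 (gen_y, true).

Definition rho_letter (n : nat) (l : 'I_n * bool) : word xy :=
  if l.2 then inv_word (rho_img l.1) else rho_img l.1.

Definition rho_hom (n : nat) (w : word 'I_n) : word xy :=
  flatten (map (@rho_letter n) w).

(* Main.v *)
Require Import Defs.
From mathcomp Require Import all_boot.
From Stdlib Require Import Setoid Morphisms.
Set Implicit Arguments.
Section G.
Variables (S : Type) (R : seq (word S)).
Lemma we_catl c a b : wequiv R a b -> wequiv R (c ++ a) (c ++ b).
Proof.
elim=> [w|w1 w2 _ IH|w1 w2 w3 _ IH1 _ IH2|u v s bb|u v r Hr].
- exact: we_refl.
- exact: we_sym.
- exact: we_trans IH1 IH2.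
- by rewrite !catA -(catA _ _ v); apply: we_free.
- by rewrite !catA -(catA _ _ v); apply: we_rel.
Qed.
Lemma we_catr c a b : wequiv R a b -> wequiv R (a ++ c) (b ++ c).
Proof.
elim=> [w|w1 w2 _ IH|w1 w2 w3 _ IH1 _ IH2|u v s bb|u v r Hr].
- exact: we_refl.
- exact: we_sym.
- exact: we_trans IH1 IH2.
- by rewrite -!catA; apply: we_free.
- by rewrite -!catA; apply: we_rel.
Qed.
Global Instance we_equiv : Equivalence (wequiv R).
Proof. split; [exact: we_refl| exact: we_sym| exact: we_trans]. Qed.
Global Instance we_cat_proper : Proper (wequiv R ==> wequiv R ==> wequiv R) (@cat (S * bool)).
Proof. move=> a b Hab c d Hcd; apply: we_trans (we_catr c Hab) (we_catl b Hcd). Qed.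
End G.
Section G2.
Variables (S : Type) (R : seq (word S)).
Lemma inv_cat (a b : word S) : inv_word (a ++ b) = inv_word b ++ inv_word a.
Proof. by rewrite /inv_word map_cat rev_cat. Qed.
Lemma inv_invK (a : word S) : inv_word (inv_word a) = a.
Proof. rewrite /inv_word map_rev revK -map_comp -[RHS]map_id; apply: eq_map => -[s b] /=; by rewrite negbK. Qed.
Lemma inv_cons l (a : word S) : inv_word (l :: a) = inv_word a ++ [:: (l.1, ~~ l.2)].
Proof. by rewrite -cat1s inv_cat. Qed.
Lemma we_cancel (w : word S) : wequiv R (w ++ inv_word w) [::].
Proof.
elim: w => [|[s b] w IH] /=; first reflexivity.
rewrite inv_cons /= catA -cat1s -(catA [:: _]) IH /=.
exact: (we_free R [::] [::]).
Qed.
Lemma we_cancel' (w : word S) : wequiv R (inv_word w ++ w) [::].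
Proof. by have := we_cancel (inv_word w); rewrite inv_invK. Qed.
Lemma we_inv (a b : word S) : wequiv R a b -> wequiv R (inv_word a) (inv_word b).
Proof.
move=> H.
transitivity (inv_word a ++ (b ++ inv_word b)); first by rewrite (we_cancel b) cats0; reflexivity.
transitivity (inv_word a ++ (a ++ inv_word b)); first exact: (we_catl _ (we_catr _ (we_sym H))).
by rewrite catA we_cancel'; reflexivity.
Qed.
Global Instance we_inv_proper : Proper (wequiv R ==> wequiv R) (@inv_word S).
Proof. move=> a b; exact: we_inv. Qed.
Lemma we_rel0 r : List.In r R -> wequiv R r [::].
Proof. by move=> Hr; have := we_rel [::] [::] Hr; rewrite /= cats0. Qed.
End G2.

Definition homw (S T : Type) (f : S * bool -> word T) (w : word S) : word T :=
  flatten (map f w).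
Lemma homw_cat S T (f : S * bool -> word T) a b : homw f (a ++ b) = homw f a ++ homw f b.
Proof. by rewrite /homw map_cat flatten_cat. Qed.
Lemma homw_inv S T (f : S * bool -> word T) (Hf : forall l, f (l.1, ~~ l.2) = inv_word (f l)) w :
  homw f (inv_word w) = inv_word (homw f w).
Proof.
elim: w => [|l w IH] //=; rewrite inv_cons homw_cat IH.
by rewrite /homw /= Hf cats0 -/(homw f w) inv_cat.
Qed.
Lemma homw_wequiv S T (R : seq (word S)) (R' : seq (word T)) (f : S * bool -> word T)
  (Hf : forall l, f (l.1, ~~ l.2) = inv_word (f l))
  (Hr : forall r, List.In r R -> wequiv R' (homw f r) [::]) a b :
  wequiv R a b -> wequiv R' (homw f a) (homw f b).
Proof.
elim=> [w|w1 w2 _ IH|w1 w2 w3 _ IH1 _ IH2|u v s bb|u v r Hrr].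
- reflexivity.
- by symmetry.
- exact: we_trans IH1 IH2.
- rewrite !homw_cat; rewrite /homw /= cats0 (Hf (s, bb)).
  rewrite -/(homw f u) -/(homw f v) catA we_cancel cats0; reflexivity.
- by rewrite !homw_cat (Hr _ Hrr); reflexivity.
Qed.
Lemma In_mem (T : eqType) (x : T) s : x \in s -> List.In x s.
Proof. elim: s => //= y s IH; rewrite in_cons => /orP[/eqP->|/IH]; auto. Qed.
Lemma nseqSr T k (a : T) : nseq k.+1 a = nseq k a ++ [:: a].
Proof. by elim: k => //= k <-. Qed.
Lemma flatten_nseq1 T k (a : T) : flatten (nseq k [:: a]) = nseq k a.
Proof. by elim: k => //= k ->. Qed.
Set Implicit Arguments.

Notation X := (gen_x, false).
Notation Xi := (gen_x, true).
Notation Y := (gen_y, false).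
Notation Yi := (gen_y, true).

Lemma mem_In (T : eqType) (x : T) s : List.In x s -> x \in s.
Proof. elim: s => //= y s IH [->|/IH]; rewrite in_cons ?eqxx // => ->; exact: orbT. Qed.

Lemma ord_of_val n (i0 : 'I_n) k : k < n -> (ord_of i0 k : nat) = k.
Proof. by move=> h; rewrite /ord_of val_insubd h. Qed.

Lemma key m : wequiv (torus_rels m.+1) (nseq m.+1 X ++ nseq m.+1 Yi) [:: Y].
Proof.
transitivity ((nseq m.+1 X ++ nseq m.+1 Yi) ++ [:: Yi; Y]).
  symmetry; have := we_free (torus_rels m.+1) (nseq m.+1 X ++ nseq m.+1 Yi) [::] gen_y true.
  by rewrite !cats0 /=; apply.
have -> : (nseq m.+1 X ++ nseq m.+1 Yi) ++ [:: Yi; Y] = [::] ++ (nseq m.+1 X ++ nseq m.+2 Yi) ++ [:: Y].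
  by rewrite (nseqSr m.+1) -!catA.
by apply: we_rel; left.
Qed.

Lemma rho_imgE n (i : 'I_n) k : (i : nat) = k -> rho_img i = nseq k.+1 X ++ nseq k.+1 Yi.
Proof. by move=> <-. Qed.

Local Arguments rho_img : simpl never.
Local Arguments nseq : simpl never.

Lemma torus_rel_ok m r : List.In r (rho_rels m.+1) ->
  wequiv (torus_rels m.+1) (homw (@rho_letter m.+1) r) [::].
Proof.
move/mem_In/mapP=> [i]; rewrite mem_filter => /andP[hi _] ->.
set K := nseq m.+1 X ++ nseq m.+1 Yi.
set W := nseq i.+1 X ++ nseq i.+1 Yi.
set W' := nseq i.+2 X ++ nseq i.+2 Yi.
have -> : homw (@rho_letter m.+1) (rho_relator i) =
   [:: X; Yi] ++ K ++ W ++ inv_word K ++ inv_word W' ++ [::].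
  rewrite /rho_relator /homw /= /rho_letter /rho_img /=.
  by rewrite !ord_of_val ?ltnSn.
rewrite cats0 /K (key m) /=.
change (wequiv (torus_rels m.+1) ([:: X] ++ [:: (gen_y, true); (gen_y, ~~ true)] ++
   (X :: (nseq i X ++ nseq i.+1 Yi) ++ Yi :: inv_word W')) [::]).
rewrite we_free.
have -> : [:: X] ++ X :: (nseq i X ++ nseq i.+1 Yi) ++ Yi :: inv_word W' = W' ++ inv_word W'.
  by rewrite /W' (nseqSr i.+1 Yi) -!catA.
exact: we_cancel.
Qed.

Definition psiA m : word 'I_m.+1 := [:: (inord 0, false); (inord m, false)].
Definition psi_letter m (l : xy * bool) : word 'I_m.+1 :=
  let base := if l.1 is gen_x then psiA m else [:: (inord m, false)] in
  if l.2 then inv_word base else base.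

Lemma psi_inv m l : psi_letter m (l.1, ~~ l.2) = inv_word (psi_letter m l).
Proof. by case: l => [[] []]. Qed.

Lemma rho_inv n l : @rho_letter n (l.1, ~~ l.2) = inv_word (rho_letter l).
Proof. case: l => s [] /=; rewrite /rho_letter /= //; exact: (esym (inv_invK _)). Qed.

Lemma ord_ofE m (i0 : 'I_m.+1) k : k <= m -> ord_of i0 k = inord k.
Proof. move=> h; apply: val_inj; rewrite /ord_of val_insubd ltnS h; apply/esym/inordK; by rewrite ltnS. Qed.

Lemma rel_in m k : k < m ->
  List.In [:: (inord 0, false); (inord m, false); (inord k, false); (inord m, true);
              (inord k.+1, true)] (rho_rels m.+1).
Proof.
move=> hk.
have <- : rho_relator (inord k : 'I_m.+1) = [:: (inord 0, false); (inord m, false);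
     (inord k, false); (inord m, true); (inord k.+1, true)].
  have hk1 : k < m.+1 by apply: ltnW.
  rewrite /rho_relator [m.+1.-1]/= (inordK hk1) (ord_ofE _ _ (leq0n m)) (ord_ofE _ _ (leqnn m)).
  by rewrite (ord_ofE _ _ (ltnW hk)) (ord_ofE _ _ hk).
apply: In_mem; apply: map_f; rewrite mem_filter mem_enum andbT inordK //.
exact: ltnW.
Qed.

Lemma claim m k : k <= m -> wequiv (rho_rels m.+1)
  (flatten (nseq k.+1 (psiA m)) ++ nseq k.+1 (inord m, true)) [:: (inord k, false)].
Proof.
elim: k => [_|k IH hk].
  change (wequiv (rho_rels m.+1) ([:: (inord 0, false)] ++
     [:: (inord m, false); (inord m, ~~ false)] ++ [::]) [:: (inord 0, false)]).
  by rewrite we_free; reflexivity.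
rewrite (nseqSr k.+1 (inord m, true)).
change (flatten (nseq k.+2 (psiA m))) with (psiA m ++ flatten (nseq k.+1 (psiA m))).
rewrite -catA (catA (flatten _)) (IH (ltnW hk)).
transitivity ([:: (inord 0 : 'I_m.+1, false); (inord m, false); (inord k, false); (inord m, true);
              (inord k.+1, true)] ++ [:: (inord k.+1, false)]).
  symmetry.
  change (wequiv (rho_rels m.+1) ([:: (inord 0 : 'I_m.+1, false); (inord m, false); (inord k, false); (inord m, true)] ++
     [:: (inord k.+1, true); (inord k.+1, ~~ true)] ++ [::]) (psiA m ++ [:: (inord k, false)] ++ [:: (inord m, true)])).
  by rewrite we_free cats0; reflexivity.
by rewrite (@we_rel0 _ _ _ (rel_in m k hk)); reflexivity.
Qed.

Lemma homw_nseq S T (f : S * bool -> word T) k l : homw f (nseq k l) = flatten (nseq k (f l)).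
Proof. by elim: k => //= k IH; rewrite /homw /= -/(homw f _) IH. Qed.

Lemma psi_rel_ok m r : List.In r (torus_rels m.+1) ->
  wequiv (rho_rels m.+1) (homw (psi_letter m) r) [::].
Proof.
case=> // <-.
rewrite homw_cat !homw_nseq.
change (psi_letter m X) with (psiA m); change (psi_letter m Yi) with [:: (inord m : 'I_m.+1, true)].
rewrite flatten_nseq1 (nseqSr m.+1) catA (@claim m m (leqnn m)).
change (wequiv (rho_rels m.+1) ([::] ++ [:: (inord m, false); (inord m, ~~ false)] ++ [::]) [::]).
by rewrite we_free; reflexivity.
Qed.

Lemma psi_img m (i : 'I_m.+1) : wequiv (rho_rels m.+1) (homw (psi_letter m) (rho_img i)) [:: (i, false)].
Proof.
rewrite /rho_img homw_cat !homw_nseq.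
change (psi_letter m X) with (psiA m); change (psi_letter m Yi) with [:: (inord m : 'I_m.+1, true)].
rewrite flatten_nseq1 (@claim m i (ltn_ord i)) inord_val; reflexivity.
Qed.

Lemma psi_rho m w : wequiv (rho_rels m.+1) (homw (psi_letter m) (homw (@rho_letter m.+1) w)) w.
Proof.
elim: w => [|[i b] w IH]; first reflexivity.
change (homw (@rho_letter m.+1) ((i, b) :: w)) with (rho_letter (i, b) ++ homw (@rho_letter m.+1) w).
rewrite homw_cat IH; case: b.
  change (rho_letter (i, true)) with (inv_word (rho_img i)).
  rewrite (@homw_inv _ _ (psi_letter m) (@psi_inv m)) psi_img; reflexivity.
change (rho_letter (i, false)) with (rho_img i).
rewrite psi_img; reflexivity.
Qed.

Theorem proposition4p2 (n : nat) (hn : 1 <= n) :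
  (forall w w' : word 'I_n,
      wequiv (rho_rels n) w w' ->
      wequiv (torus_rels n) (rho_hom w) (rho_hom w')) /\
  (forall w w' : word 'I_n,
      wequiv (torus_rels n) (rho_hom w) (rho_hom w') ->
      wequiv (rho_rels n) w w') /\
  (forall v : word xy, exists w : word 'I_n,
      wequiv (torus_rels n) (rho_hom w) v).
Proof.
case: n hn => // m _.
have rhoE : forall w, rho_hom w = homw (@rho_letter m.+1) w by [].
split; [|split].
- move=> w w' H; rewrite !rhoE; apply: (homw_wequiv _ _ _ H); [exact: rho_inv | exact: torus_rel_ok].
- move=> w w' H.
  have H2 := homw_wequiv (psi_letter m) (@psi_inv m) (@psi_rel_ok m) H.
  rewrite !rhoE in H2; transitivity (homw (psi_letter m) (homw (@rho_letter m.+1) w)); first by symmetry; exact: psi_rho.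
  transitivity (homw (psi_letter m) (homw (@rho_letter m.+1) w')) =>//; exact: psi_rho.
have hY : wequiv (torus_rels m.+1) (rho_hom [:: (inord m : 'I_m.+1, false)]) [:: Y].
  change (rho_hom [:: (inord m : 'I_m.+1, false)]) with (rho_img (inord m : 'I_m.+1) ++ [::]).
  by rewrite cats0 (@rho_imgE _ _ m (inordK (ltnSn m))) (key m); reflexivity.
have hX : wequiv (torus_rels m.+1)
    (rho_hom [:: (inord 0 : 'I_m.+1, false); (inord m : 'I_m.+1, false)]) [:: X].
  change (rho_hom [:: (inord 0 : 'I_m.+1, false); (inord m : 'I_m.+1, false)]) with
    (rho_img (inord 0 : 'I_m.+1) ++ rho_img (inord m : 'I_m.+1) ++ [::]).
  rewrite cats0 (@rho_imgE _ _ m (inordK (ltnSn m))) (key m).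
  rewrite (@rho_imgE _ _ 0 (inordK (ltn0Sn m))).
  change (wequiv (torus_rels m.+1) ([:: X] ++ [:: (gen_y, true); (gen_y, ~~ true)] ++ [::]) [:: X]).
  by rewrite we_free; reflexivity.
have hl : forall l : xy * bool, exists w : word 'I_m.+1, wequiv (torus_rels m.+1) (rho_hom w) [:: l].
  have hinv : forall (w : word 'I_m.+1) l, wequiv (torus_rels m.+1) (rho_hom w) [:: (l, false)] ->
      wequiv (torus_rels m.+1) (rho_hom (inv_word w)) [:: (l, true)].
    move=> w l Hw; rewrite rhoE (@homw_inv _ _ _ (@rho_inv m.+1)) -rhoE Hw; reflexivity.
  case=> [[] []].
  - eexists; exact: hinv hX.
  - eexists; exact: hX.
  - eexists; exact: hinv hY.
  - eexists; exact: hY.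
elim=> [|l v [w Hw]]; first by exists [::]; reflexivity.
have [wl Hl] := hl l.
exists (wl ++ w); rewrite rhoE homw_cat -!rhoE Hl Hw; reflexivity.
Qed.
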